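(* Let $U=\begin{bmatrix} a & b\\ c & d\end{bmatrix}$ be a $2\times 2$ unitary matrix with either $abcd\neq0$ or $a=0$. Then $\mathcal{M}_s(U)\setminus(\mathcal{M}_{unif}\cup\mathcal{M}_{exp})\neq\emptyset$, i.e. the quantum walk defined by $U$ has a stationary measure that is neither uniform nor of the exponential form defining $\mathcal{M}_{exp}$.
   Context: Two-state quantum walk on $\mathbb{Z}$: states $\Psi=(\Psi(x))_{x\in\mathbb{Z}}\in(\mathbb{C}^2)^{\mathbb{Z}}$, $\Psi(x)={}^T[\Psi^L(x),\Psi^R(x)]$; evolution $(U^{(s)}\Psi)^L(x)=a\Psi^L(x+1)+b\Psi^R(x+1)$, $(U^{(s)}\Psi)^R(x)=c\Psi^L(x-1)+d\Psi^R(x-1)$. $\phi(\Psi)(x)=|\Psi^L(x)|^2+|\Psi^R(x)|^2$. $\mathcal{M}_s(U)=\{\mu\in[0,\infty)^{\mathbb{Z}}\setminus\{0\}:\exists\Psi_0$ with $\phi((U^{(s)})^n\Psi_0)=\mu$ for all $n\ge0\}$. $\mathcal{M}_{unif}=\{\mu_u^{(c)}:c>0\}$ with $\mu_u^{(c)}(x)=c$ for all $x$. $\mathcal{M}_{exp}$ is the set of measures $\mu$ on $\mathbb{Z}$ for which there exist constants $C_+,C_0,C_->0$ and $\gamma\in(0,1)$ with $\mu(x)=C_+\gamma^{-|x|}$ for $x\ge1$, $\mu(0)=C_0$, $\mu(x)=C_-\gamma^{-|x|}$ for $x\le -1$. *)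

(* Defs.v *)
(* Complex numbers: an arbitrary numClosedFieldType C
   (e.g. algC). *)
From HB Require Import structures.
From mathcomp Require Import all_boot all_order all_algebra.
Set Implicit Arguments. Unset Strict Implicit. Unset Printing Implicit Defensive.
Import Order.TTheory GRing.Theory Num.Theory.
Local Open Scope ring_scope.

(* A state Psi : int -> C * C, Psi x = (Psi^L(x), Psi^R(x)). *)
Definition qstate (C : numClosedFieldType) := int -> C * C.

Definition unitary (C : numClosedFieldType) (U : 'M[C]_2) : Prop :=
  U *m (map_mx Num.conj U)^T = 1%:M.

Definition walk_step (C : numClosedFieldType) (U : 'M[C]_2) (Psi : qstate C)
  : qstate C :=
  fun x =>
    (U 0 0 * (Psi (x + 1)).1 + U 0 1 * (Psi (x + 1)).2,
     U 1 0 * (Psi (x - 1)).1 + U 1 1 * (Psi (x - 1)).2).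

Definition phi (C : numClosedFieldType) (Psi : qstate C) : int -> C :=
  fun x => `|(Psi x).1| ^+ 2 + `|(Psi x).2| ^+ 2.

Definition stationary_measure (C : numClosedFieldType) (U : 'M[C]_2)
  (mu : int -> C) : Prop :=
  (forall x, 0 <= mu x) /\ (exists x, mu x != 0) /\
  exists Psi0 : qstate C,
    forall n : nat, phi (iter n (walk_step U) Psi0) = mu.

Definition uniform_measure (C : numClosedFieldType) (mu : int -> C) : Prop :=
  exists c : C, 0 < c /\ forall x, mu x = c.

Definition exp_measure (C : numClosedFieldType) (mu : int -> C) : Prop :=
  exists (Cp C0 Cm gamma : C),
    [/\ 0 < Cp, 0 < C0, 0 < Cm, 0 < gamma & gamma < 1] /\
    (forall x : int, (1 <= x)%R -> mu x = Cp * gamma ^- (absz x)) /\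
    mu 0 = C0 /\
    (forall x : int, (x <= -1)%R -> mu x = Cm * gamma ^- (absz x)).

(* Main.v *)
Require Import Defs.
From HB Require Import structures.
From mathcomp Require Import all_boot all_order all_algebra.
From mathcomp Require Import ring.
From Stdlib Require Import FunctionalExtensionality.
Import Order.TTheory GRing.Theory Num.Theory.
Local Open Scope ring_scope.

Lemma unit_entries (C : numClosedFieldType) (U : 'M[C]_2) : unitary U ->
  [/\ U 0 0 * (U 0 0)^* + U 0 1 * (U 0 1)^* = 1,
      U 0 0 * (U 1 0)^* + U 0 1 * (U 1 1)^* = 0 &
      U 1 0 * (U 1 0)^* + U 1 1 * (U 1 1)^* = 1].
Proof.
rewrite /unitary => HU.
have E i j : \sum_k U i k * (U j k)^* = (i == j)%:R.
  have := congr1 (fun M : 'M[C]_2 => M i j) HU; rewrite !mxE.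
  by move=> <-; apply: eq_bigr => k _; rewrite !mxE.
have o1 : lift ord0 ord0 = 1 :> 'I_2 by apply/val_inj.
have o0 : ord0 = 0 :> 'I_2 by [].
split.
- by have := E 0 0; rewrite big_ord_recl big_ord1 o1.
- by have := E 0 1; rewrite big_ord_recl big_ord1 o1.
- by have := E 1 1; rewrite big_ord_recl big_ord1 o1.
Qed.

Lemma norm1 (C : numClosedFieldType) (x : C) : x * x^* = 1 -> `|x| = 1.
Proof. by move=> h; apply/eqP; rewrite -sqrp_eq1 // normCK h. Qed.

Lemma unit_derived (C : numClosedFieldType) (a b c d : C) :
  a * a^* + b * b^* = 1 -> a * c^* + b * d^* = 0 -> c * c^* + d * d^* = 1 ->
  [/\ d = (a * d - b * c) * a^*, c = - ((a * d - b * c) * b^*) &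
      (a * d - b * c) * (a * d - b * c)^* = 1].
Proof.
move=> H1 H2 H3.
have H2' : a^* * c + b^* * d = 0.
  by have := congr1 Num.conj H2; rewrite rmorphD !rmorphM /= !conjCK rmorph0 mulrC [b^* * _]mulrC.
have Ed : d = (a * d - b * c) * a^*.
  apply/eqP; rewrite -subr_eq0.
  have -> : d - (a * d - b * c) * a^* = d * (1 - (a * a^* + b * b^*)) + b * (a^* * c + b^* * d) by ring.
  by rewrite H1 H2' subrr mulr0 mulr0 addr0.
have Ec : c = - ((a * d - b * c) * b^*).
  apply/eqP; rewrite -subr_eq0.
  have -> : c - - ((a * d - b * c) * b^*) = c * (1 - (a * a^* + b * b^*)) + a * (a^* * c + b^* * d) by ring.
  by rewrite H1 H2' subrr mulr0 mulr0 addr0.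
split => //.
have key : forall D, c = - (D * b^*) -> d = D * a^* ->
    c * c^* + d * d^* = D * D^* * (a * a^* + b * b^*).
  by move=> D -> ->; rewrite rmorphN !rmorphM /= !conjCK; ring.
by rewrite -H3 (key _ Ec Ed) H1 mulr1.
Qed.

Lemma eigen_stat (C : numClosedFieldType) (U : 'M[C]_2) (Psi : qstate C) (l : C) :
  `|l| = 1 ->
  (forall x, walk_step U Psi x = (l * (Psi x).1, l * (Psi x).2)) ->
  forall n : nat, phi (iter n (walk_step U) Psi) = phi Psi.
Proof.
move=> hl hw.
have It n x : iter n (walk_step U) Psi x = (l ^+ n * (Psi x).1, l ^+ n * (Psi x).2).
  elim: n x => [|n IH] x /=; first by rewrite !mul1r; case: (Psi x).
  rewrite /walk_step !IH /=.
  have := hw x; rewrite /walk_step => [[h1 h2]].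
  congr pair.
    by rewrite !mulrA ![_ * l ^+ n]mulrC -!mulrA -mulrDr h1 exprS; ring.
  by rewrite !mulrA ![_ * l ^+ n]mulrC -!mulrA -mulrDr h2 exprS; ring.
move=> n; apply: functional_extensionality => x.
by rewrite /phi It /= !normrM normrX hl expr1n !mul1r.
Qed.

Theorem theorem2 (C : numClosedFieldType) (U : 'M[C]_2) :
  unitary U ->
  (U 0 0 * U 0 1 * U 1 0 * U 1 1 != 0 \/ U 0 0 = 0) ->
  exists mu : int -> C,
    stationary_measure U mu /\ ~ uniform_measure mu /\ ~ exp_measure mu.
Proof.
move=> HU Hcase.
have [H1 H2 H3] := unit_entries _ _ HU.
have [Ed Ec HD] := unit_derived _ _ _ _ _ H1 H2 H3.
set a := U 0 0 in H1 H2 H3 Ed Ec HD Hcase *.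
set b := U 0 1 in H1 H2 H3 Ed Ec HD Hcase *.
set c := U 1 0 in H1 H2 H3 Ed Ec HD Hcase *.
set d := U 1 1 in H1 H2 H3 Ed Ec HD Hcase *.
have e1 : forall x : int, (x + 1 == 1) = (x == 0).
  by move=> x; rewrite -{2}(add0r 1) (inj_eq (addIr 1)).
have e2 : forall x : int, (x - 1 == 0) = (x == 1).
  by move=> x; rewrite subr_eq0.
case: Hcase => [Hnz | Ha0].
-
  have [ha hb hc] : [/\ a != 0, b != 0 & c != 0].
    by move: Hnz; rewrite !mulf_eq0 !negb_or => /andP[/andP[/andP[-> ->] ->] _].
  set D := a * d - b * c in Ed Ec HD.
  set de := sqrtC D.
  have hd2 : de ^+ 2 = D by rewrite sqrtCK.
  have hde : `|de| = 1.
    by apply/eqP; rewrite -sqrp_eq1 // -normrX hd2 (norm1 _ _ HD).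
  set r := `|a|. set be := `|b|.
  have r0 : 0 < r by rewrite normr_gt0.
  have rn0 : r != 0 by rewrite gt_eqF.
  have be0 : 0 < be by rewrite normr_gt0.
  have hr : r ^+ 2 + be ^+ 2 = 1 by rewrite /r /be !normCK.
  have haa : a * a^* = r ^+ 2 by rewrite /r normCK.
  set u := (1 + be) / r.
  have u0 : 0 <= u.
    apply: divr_ge0; last exact: normr_ge0.
    exact: (addr_ge0 ler01 (normr_ge0 b)).
  have r1 : r <= 1.
    rewrite -(expr_le1 (n := 2)) //; last exact: ltW r0.
    by rewrite -hr lerDl exprn_ge0 // ltW.
  have u1 : 1 < u.
    rewrite /u ltr_pdivlMr // mul1r; apply: le_lt_trans r1 _; by rewrite ltrDl.
  set z := de * a^* * u / r.
  have hz : `|z| = u.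
    rewrite /z normf_div !normrM hde norm_conjC normfV normr_id (ger0_norm (x := 1 + be)); last exact: (addr_ge0 ler01 (normr_ge0 b)).
    by rewrite -/r /u; field.
  have zn0 : z != 0 by rewrite -normr_eq0 hz gt_eqF // (lt_trans ltr01 u1).
  have zu : z \is a GRing.unit by rewrite unitfE.
  have hdd : d = de ^+ 2 * a^* by rewrite Ed hd2.
  have Kz : a * z ^+ 2 - 2 * de * z + d = 0.
    have -> : a * z ^+ 2 - 2 * de * z + d =
       de ^+ 2 * a^* * ((a * a^*) * (1 + be) ^+ 2 - 2 * (1 + be) * r ^+ 2 + r ^+ 4) / r ^+ 4.
      by rewrite /z /u hdd; field.
    rewrite haa.
    have -> : r ^+ 2 * (1 + be) ^+ 2 - 2 * (1 + be) * r ^+ 2 + r ^+ 4 =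
              r ^+ 2 * (r ^+ 2 + be ^+ 2 - 1) by ring.
    by rewrite hr subrr !mulr0 mul0r.
  set p := de * z - d.
  have row1 : z * (a * p + b * c) = de * p.
    apply/eqP; rewrite -subr_eq0.
    have -> : z * (a * p + b * c) - de * p =
      de * (a * z ^+ 2 - 2 * de * z + d) + z * (de ^+ 2 - D) by rewrite /p /D; ring.
    by rewrite Kz hd2 subrr !mulr0 addr0.
  have row2 : c * p + d * c = de * z * c by rewrite /p; ring.
  pose Psi : qstate C := fun x => (z ^ x * p, z ^ x * c).
  have hw : forall x, walk_step U Psi x = (de * (Psi x).1, de * (Psi x).2).
    move=> x; rewrite /walk_step /Psi /= -/a -/b -/c -/d.
    rewrite !exprzDr // expr1z exprN1.
    congr pair.
      transitivity (z ^ x * (z * (a * p + b * c))); first by ring.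
      by rewrite row1; ring.
    transitivity (z ^ x * z^-1 * (c * p + d * c)); first by ring.
    by rewrite row2; field.
  set K := `|p| ^+ 2 + `|c| ^+ 2.
  have K0 : 0 < K.
    by rewrite /K ltr_wpDl ?exprn_ge0 // exprn_gt0 // normr_gt0.
  have mux : forall x, phi Psi x = `|z ^ x| ^+ 2 * K.
    by move=> x; rewrite /phi /Psi /= /K !normrM !exprMn mulrDr.
  exists (phi Psi); split; last split.
  + split; first by move=> x; rewrite /phi addr_ge0 // exprn_ge0.
    split; first by exists 0; rewrite mux expr0z normr1 expr1n mul1r gt_eqF.
    by exists Psi; apply: (eigen_stat _ _ _ _ hde hw).
  + case=> c0 [c0p hc0].
    have := hc0 1; rewrite -(hc0 0) !mux expr0z expr1z hz normr1 expr1n mul1r => h.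
    have : u ^+ 2 == 1.
      by rewrite -(inj_eq (mulIf (negbT (gt_eqF K0)))) h mul1r.
    by rewrite sqrp_eq1 // gt_eqF.
  + case=> [Cp [C0 [Cm [g [[_ _ Cmp gp g1] [_ [_ hm]]]]]]].
    have h1 := hm (-1) isT; have h2 := hm (-2) isT.
    rewrite mux exprN1 normfV hz /= in h1; rewrite mux -exprnN normfV normrX hz /= in h2.
    have gn0 : g != 0 := negbT (gt_eqF gp).
    have un0 : u != 0 by rewrite gt_eqF // (lt_trans ltr01 u1).
    have Kn0 : K != 0 := negbT (gt_eqF K0).
    have h2' : u^-1 ^+ 4 * K = Cm / g ^+ 2 by rewrite -[RHS]h2; field.
    have E1 : u^-1 ^+ 4 * K * g = u^-1 ^+ 2 * K by rewrite h2' h1; field.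
    have hg : g = u ^+ 2.
      have E2 : g = (u^-1 ^+ 4 * K * g) * u ^+ 4 / K.
        by field; rewrite Kn0 un0.
      by rewrite {1}E2 E1; field; rewrite Kn0 un0.
    have u2 : 1 < u ^+ 2 by rewrite expr_gt1 // ltW.
    by move: g1; rewrite hg => /lt_trans /(_ u2); rewrite ltxx.

-
  have d0 : d = 0 by rewrite Ed Ha0 conjC0 mulr0.
  have hb : `|b| = 1 by apply: norm1 _ _; rewrite -H1 Ha0 mul0r add0r.
  have hc : `|c| = 1 by apply: norm1 _ _; rewrite -H3 d0 mul0r addr0.
  set l := sqrtC (b * c).
  have hl2 : l ^+ 2 = b * c by rewrite sqrtCK.
  have hl : `|l| = 1.
    by apply/eqP; rewrite -sqrp_eq1 // -normrX hl2 normrM hb hc mulr1.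
  pose Psi : qstate C := fun x => (if x == 0 then l else 0, if x == 1 then c else 0).
  have hw : forall x, walk_step U Psi x = (l * (Psi x).1, l * (Psi x).2).
    move=> x; rewrite /walk_step /Psi /= -/a -/b -/c -/d Ha0 d0 e1 e2 !mul0r !add0r addr0.
    congr pair; [case: (x == 0) | case: (x == 1)]; rewrite ?mulr0 //; last by rewrite mulrC.
  exists (phi Psi); split; last split.
  + split; first by move=> x; rewrite /phi addr_ge0 // exprn_ge0.
    split; first by exists 0; rewrite /phi /Psi /= hl normr0 expr0n /= addr0 expr1n oner_eq0.
    by exists Psi; apply: (eigen_stat _ _ _ _ hl hw).
  + case=> c0 [c0p hc0]; have := hc0 2; rewrite /phi /Psi /= normr0 expr0n /= addr0 => h.
    by move: c0p; rewrite -h ltxx.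
  + case=> [Cp [C0 [Cm [g [[Cpp _ _ gp _] [hp _]]]]]].
    have := hp 2 isT; rewrite /phi /Psi /= normr0 expr0n /= addr0 => h.
    have : 0 < Cp * g ^- 2 by rewrite mulr_gt0 // invr_gt0 exprn_gt0.
    by rewrite -h ltxx.
Qed.
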